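(* Let $q$ be a prime power, let $V = V(4,q)$ be the $4$-dimensional vector space over $\mathrm{GF}(q)$, and let $X$ be the set of $2$-dimensional subspaces (lines) of $V$, so $|X| = (q^2+1)(q^2+q+1)$. Let $Y \subseteq X$ be such that its characteristic function $f_Y$ has degree at most $1$, and write $|Y| = x(q^2+q+1)$ (with $x$ a real number; in fact an integer). Then for every $1$-dimensional subspace $P$ and every $3$-dimensional subspace $H$ of $V$ with $P \subseteq H$, $$x = |\{ L \in Y : P \subseteq L\}| + |\{ L \in Y : L \subseteq H\}| - (q+1)\,|\{L \in Y : P \subseteq L \subseteq H\}|.$$
   Context: For a $1$-dimensional subspace $P$ of $V$, let $x_P\colon X \to \{0,1\}$ be defined by $x_P(L) = 1$ if $P \subseteq L$ and $x_P(L) = 0$ otherwise. A function $f\colon X \to \mathbb{R}$ has degree at most $1$ if it can be written as $f = c + \sum_P c_P x_P$ (sum over all $1$-dimensional subspaces $P$ of $V$) for real constants $c, c_P$. The characteristic function $f_Y$ of $Y \subseteq X$ takes value $1$ on $Y$ and $0$ elsewhere. (Equivalently, $\deg f \le 1$ means $f$ lies in the sum of the first two eigenspaces $V_0 + V_1$ of the Grassmann scheme $J_q(4,2)$ in its standard cometric (Q-polynomial) ordering.) *)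

(* Defs.v *)
(* Subspaces of V = F^4 (F a finite field, q = #|F|) are
   represented canonically by square matrices A : 'M[F]_4 with <<A>>%MS = A
   (the canonical generator of a row space), so they form a finite type. *)
From HB Require Import structures.
From mathcomp Require Import all_boot all_order all_algebra.
From mathcomp Require Import reals.
Set Implicit Arguments. Unset Strict Implicit. Unset Printing Implicit Defensive.
Import Order.TTheory GRing.Theory Num.Theory.
Local Open Scope ring_scope.

Definition subsp (F : finFieldType) (k : nat) : {set 'M[F]_4} :=
  [set A : 'M[F]_4 | (\rank A == k)%N && (<<A>>%MS == A)].

Definition xP (R : realType) (F : finFieldType) (P L : 'M[F]_4) : R :=
  ((P <= L)%MS)%:R.

Definition charf (R : realType) (F : finFieldType) (Y : {set 'M[F]_4})
  (L : 'M[F]_4) : R := (L \in Y)%:R.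

Definition deg_le1 (R : realType) (F : finFieldType) (f : 'M[F]_4 -> R) : Prop :=
  exists (c : R) (cP : 'M[F]_4 -> R),
    forall L, L \in subsp F 2 ->
      f L = c + \sum_(P in subsp F 1) cP P * xP R P L.

(* Main.v *)
Require Import Defs.
From HB Require Import structures.
From mathcomp Require Import all_boot all_order all_algebra.
From mathcomp Require Import zify ring lra.
From mathcomp Require Import reals.
Set Implicit Arguments. Unset Strict Implicit. Unset Printing Implicit Defensive.
Import Order.TTheory GRing.Theory Num.Theory.
Local Open Scope ring_scope.
Section Count.
Variable F : finFieldType.
Local Notation q := #|F|.

Lemma fiber_count (T U : finType) (A : {set T}) (B : {set U}) (f : T -> U) k :
  (forall x, x \in A -> f x \in B) ->
  (forall y, y \in B -> #|[set x in A | f x == y]| = k) ->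
  #|A| = (#|B| * k)%N.
Proof.
move=> fAB fib; rewrite -sum1_card (partition_big f (mem B)) //=.
rewrite -sum1_card big_distrl /=; apply: eq_bigr => y yB.
rewrite mul1n -(fib y yB) -sum1_card; apply: eq_bigl => x; by rewrite inE.
Qed.

Lemma card_vec m (W : 'M[F]_(m,4)) :
  #|[set v : 'rV[F]_4 | (v <= W)%MS]| = (q ^ \rank W)%N.
Proof.
have -> : [set v : 'rV[F]_4 | (v <= W)%MS] =
   [set (u *m row_base W)%R | u : 'rV[F]_(\rank W)].
  apply/setP => v; rewrite inE; apply/idP/imsetP.
    move=> vW; have : (v <= row_base W)%MS by rewrite eq_row_base.
    move=> /submxP [u ->]; by exists u.
  move=> [u _ ->]; apply: submx_trans (submxMl _ _) _; by rewrite eq_row_base.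
rewrite card_imset; last exact: row_free_inj (row_base_free W).
by rewrite card_mx mul1n.
Qed.

Lemma card_vecD m1 m2 (U : 'M[F]_(m1,4)) (W : 'M[F]_(m2,4)) : (U <= W)%MS ->
  #|[set v : 'rV[F]_4 | (v <= W)%MS && ~~ (v <= U)%MS]| = (q ^ \rank W - q ^ \rank U)%N.
Proof.
move=> UW.
have -> : [set v : 'rV[F]_4 | (v <= W)%MS && ~~ (v <= U)%MS] =
  [set v : 'rV[F]_4 | (v <= W)%MS] :\: [set v : 'rV[F]_4 | (v <= U)%MS].
  by apply/setP => v; rewrite !inE andbC.
rewrite cardsD; congr (_ - _)%N; first exact: card_vec.
rewrite -card_vec; apply: eq_card => v; rewrite !inE andbC.
by case vU: (v <= U)%MS => //=; rewrite (submx_trans vU UW).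
Qed.

Lemma rank_Uv m (U : 'M[F]_(m,4)) (v : 'rV[F]_4) :
  ~~ (v <= U)%MS -> \rank (U + v)%MS = (\rank U).+1.
Proof.
move=> vU.
have lt : (\rank U < \rank (U + v)%MS)%N.
  apply: rank_ltmx; rewrite ltmxE addsmxSl /=; apply: contra vU => h.
  exact: submx_trans (addsmxSr U v) h.
have le := leq_of_leqif (mxrank_adds_leqif U v).
have := rank_leq_row v. lia.
Qed.

Lemma count_ext (U W : 'M[F]_4) k : \rank U = k -> (U <= W)%MS ->
  (#|[set S in subsp F k.+1 | (U <= S)%MS && (S <= W)%MS]| * (q^k.+1 - q^k))%N
   = (q^(\rank W) - q^k)%N.
Proof.
move=> rU UW; subst k; symmetry; rewrite -(card_vecD UW).
apply: (fiber_count (f := fun v : 'rV[F]_4 => <<(U + v)%MS>>%MS)).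
  move=> v; rewrite !inE => /andP[vW vU].
  rewrite mxrank_gen rank_Uv // eqxx genmx_id eqxx /=.
  by rewrite !genmxE addsmxSl addsmx_sub UW vW.
move=> S; rewrite !inE => /andP[/andP[/eqP rS /eqP cS] /andP[US SW]].
rewrite -{1}rS -(card_vecD US); apply: eq_card => v; rewrite !inE.
apply/idP/idP.
  move=> /andP[/andP[_ vU] /eqP <-]; by rewrite genmxE addsmxSr vU.
move=> /andP[vS vU]; rewrite (submx_trans vS SW) vU /=; apply/eqP.
have USv : (U + v <= S)%MS by rewrite addsmx_sub US vS.
have : (U + v == S)%MS.
  by rewrite -(eq_leqif (mxrank_leqif_eq USv)) rank_Uv // rS.
by move/genmxP ->.
Qed.


Local Notation pts := (subsp F 1).
Local Notation lns := (subsp F 2).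

Lemma q_gt1 : (1 < q)%N.
Proof. exact: card_finNzRing_gt1. Qed.

Lemma canon k A : A \in subsp F k -> <<A>>%MS = A.
Proof. by rewrite inE => /andP[_ /eqP]. Qed.

Lemma rank_sub k A : A \in subsp F k -> \rank A = k.
Proof. by rewrite inE => /andP[/eqP]. Qed.

Lemma card_sum (T : finType) (A : {pred T}) : #|A| = (\sum_x (x \in A : nat))%N.
Proof. rewrite -sum1_card big_mkcond; apply: eq_bigr => x _; by case: (x \in A). Qed.

Lemma dc (W : 'M[F]_4) :
  (\sum_(L in [set L in lns | (L <= W)%MS]) #|[set P in pts | (P <= L)%MS]|)%N =
  (\sum_(P in [set P in pts | (P <= W)%MS]) #|[set L in lns | (P <= L)%MS && (L <= W)%MS]|)%N.
Proof.
have E (T1 T2 : finType) (A : {pred T1}) (B : T1 -> {pred T2}) :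
  (\sum_(i in A) #|B i| = \sum_i \sum_j ((i \in A) * (j \in B i)))%N.
  rewrite big_mkcond; apply: eq_bigr => i _; rewrite card_sum -big_distrr /=.
  by case: (i \in A); rewrite ?mul1n ?mul0n.
rewrite !E exchange_big; apply: eq_bigr => P _; apply: eq_bigr => L _.
rewrite !inE; case: (_ && (<<L>>%MS == L)); case: (_ && (<<P>>%MS == P)); rewrite /= ?muln0 ?mul0n //.
case PL: (P <= L)%MS; case LW: (L <= W)%MS; rewrite /= ?muln0 ?mul0n ?andbF //.
by rewrite (submx_trans PL LW).
Qed.

Lemma pts_in (W : 'M[F]_4) :
  (#|[set P in pts | (P <= W)%MS]| * (q ^ 1 - q ^ 0))%N = (q ^ \rank W - q ^ 0)%N.
Proof.
rewrite -(count_ext (U := (0 : 'M[F]_4)) (mxrank0 _ _ _) (sub0mx _ W)).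
congr (_ * _)%N; apply: eq_card => S; by rewrite !inE sub0mx.
Qed.

Lemma lns_thru (P W : 'M[F]_4) : P \in pts -> (P <= W)%MS ->
  (#|[set L in lns | (P <= L)%MS && (L <= W)%MS]| * (q ^ 2 - q ^ 1))%N = (q ^ \rank W - q ^ 1)%N.
Proof. move=> Pp PW; exact: count_ext (rank_sub Pp) PW. Qed.

Lemma cancel_r n m a : (0 < a)%N -> (n * a = m * a)%N -> n = m.
Proof. by move=> a0 /eqP; rewrite eqn_pmul2r // => /eqP. Qed.

Lemma pts_line L : L \in lns -> #|[set P in pts | (P <= L)%MS]| = q.+1.
Proof.
move=> Ll; have := pts_in L; rewrite (rank_sub Ll) => h.
have q1 := q_gt1; apply: (@cancel_r _ _ (q ^ 1 - q ^ 0)); first by rewrite expn1 expn0 subn_gt0.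
rewrite h !expnS !expn0 !muln1; nia.
Qed.

Lemma pts_H H : H \in subsp F 3 -> #|[set P in pts | (P <= H)%MS]| = (q^2 + q + 1)%N.
Proof.
move=> Hh; have := pts_in H; rewrite (rank_sub Hh) => h.
have q1 := q_gt1; apply: (@cancel_r _ _ (q ^ 1 - q ^ 0)); first by rewrite expn1 expn0 subn_gt0.
rewrite h !expnS !expn0 !muln1; nia.
Qed.

Lemma pts_all : #|pts| = (q^3 + q^2 + q + 1)%N.
Proof.
have := pts_in 1%:M; rewrite mxrank1.
have -> : [set P in pts | (P <= 1%:M)%MS] = pts by apply/setP => P; rewrite !inE submx1 andbT.
move=> h.
have q1 := q_gt1; apply: (@cancel_r _ _ (q ^ 1 - q ^ 0)); first by rewrite expn1 expn0 subn_gt0.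
rewrite h !expnS !expn0 !muln1; nia.
Qed.

Lemma lns_thru_all P : P \in pts -> #|[set L in lns | (P <= L)%MS]| = (q^2 + q + 1)%N.
Proof.
move=> Pp; have := lns_thru Pp (submx1 P); rewrite mxrank1.
have -> : [set L in lns | (P <= L)%MS && (L <= 1%:M)%MS] = [set L in lns | (P <= L)%MS].
  by apply/setP => L; rewrite !inE submx1 andbT.
move=> h.
have q1 := q_gt1; apply: (@cancel_r _ _ (q ^ 2 - q ^ 1)).
  rewrite !expnS expn0 !muln1; nia.
rewrite h !expnS !expn0 !muln1; nia.
Qed.

Lemma lns_thru_H P H : P \in pts -> H \in subsp F 3 -> (P <= H)%MS ->
  #|[set L in lns | (P <= L)%MS && (L <= H)%MS]| = q.+1.
Proof.
move=> Pp Hh PH; have := lns_thru Pp PH; rewrite (rank_sub Hh) => h.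
have q1 := q_gt1; apply: (@cancel_r _ _ (q ^ 2 - q ^ 1)).
  rewrite !expnS expn0 !muln1; nia.
rewrite h !expnS !expn0 !muln1; nia.
Qed.

Lemma lns_in_W (W : 'M[F]_4) n :
  (forall P, P \in pts -> (P <= W)%MS -> #|[set L in lns | (P <= L)%MS && (L <= W)%MS]| = n) ->
  (#|[set L in lns | (L <= W)%MS]| * q.+1 = #|[set P in pts | (P <= W)%MS]| * n)%N.
Proof.
move=> hn; have := dc W.
rewrite (eq_bigr (fun _ => q.+1)); last by move=> L; rewrite inE => /andP[Ll _]; exact: pts_line.
rewrite [RHS](eq_bigr (fun _ => n)); last by move=> P; rewrite inE => /andP[Pp PW]; exact: hn.
by rewrite !sum_nat_const.
Qed.

Lemma lns_all : #|lns| = ((q^2 + 1) * (q^2 + q + 1))%N.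
Proof.
have := @lns_in_W 1%:M (q^2 + q + 1)%N.
have -> : [set L in lns | (L <= 1%:M)%MS] = lns by apply/setP => L; rewrite !inE submx1 andbT.
have -> : [set P in pts | (P <= 1%:M)%MS] = pts by apply/setP => L; rewrite !inE submx1 andbT.
rewrite pts_all => h.
have e : ((q^3 + q^2 + q + 1) = (q^2 + 1) * q.+1)%N.
  rewrite !expnS expn0 !muln1 mulnDl mul1n !mulnS; lia.
apply: (@cancel_r _ _ q.+1) => //.
rewrite h; last first.
  move=> P Pp _; rewrite -(lns_thru_all Pp); apply: eq_card => L; by rewrite !inE submx1 andbT.
by rewrite e mulnAC.
Qed.
Lemma lns_H H : H \in subsp F 3 -> #|[set L in lns | (L <= H)%MS]| = (q^2 + q + 1)%N.
Proof.
move=> Hh; have := @lns_in_W H q.+1.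
rewrite pts_H // => h.
apply: (@cancel_r _ _ q.+1) => //.
rewrite h //.
move=> P Pp PH; exact: lns_thru_H.
Qed.

Section Two.
Variables P P' : 'M[F]_4.
Hypotheses (Pp : P \in pts) (P'p : P' \in pts) (nPP : P' != P).

Lemma nP'P : ~~ (P' <= P)%MS.
Proof.
apply/negP => h; have : (P' == P)%MS.
  by rewrite -(eq_leqif (mxrank_leqif_eq h)) (rank_sub Pp) (rank_sub P'p).
move/genmxP; rewrite (canon Pp) (canon P'p) => e; by move: nPP; rewrite e eqxx.
Qed.

Lemma rank_PP' : \rank (P + P')%MS = 2.
Proof.
have lt : (\rank P < \rank (P + P')%MS)%N.
  apply: rank_ltmx; rewrite ltmxE addsmxSl /=; apply: contra nP'P => h.
  exact: submx_trans (addsmxSr P P') h.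
have le := leq_of_leqif (mxrank_adds_leqif P P').
move: lt le; rewrite (rank_sub Pp) (rank_sub P'p); lia.
Qed.

Definition L0 := <<(P + P')%MS>>%MS.

Lemma L0_ln : L0 \in lns.
Proof. by rewrite inE mxrank_gen rank_PP' genmx_id !eqxx. Qed.

Lemma thru_two L : L \in lns -> ((P <= L)%MS && (P' <= L)%MS) = (L == L0).
Proof.
move=> Ll; apply/idP/eqP.
  move=> /andP[PL P'L]; have h : (P + P' <= L)%MS by rewrite addsmx_sub PL P'L.
  have : (P + P' == L)%MS by rewrite -(eq_leqif (mxrank_leqif_eq h)) rank_PP' (rank_sub Ll).
  by move/genmxP; rewrite (canon Ll) => <-.
by move=> ->; rewrite /L0 !genmxE addsmxSl addsmxSr.
Qed.

Lemma L0_sub (W : 'M[F]_4) : (L0 <= W)%MS = (P <= W)%MS && (P' <= W)%MS.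
Proof. by rewrite /L0 genmxE addsmx_sub. Qed.
End Two.

Lemma cntA P P' : P \in pts -> P' \in pts ->
  #|[set L in lns | (P <= L)%MS && (P' <= L)%MS]| = if P' == P then (q^2+q+1)%N else 1%N.
Proof.
move=> Pp P'p; case: eqP => [->|/eqP ne].
  rewrite -(lns_thru_all Pp); apply: eq_card => L; by rewrite !inE andbb.
rewrite -[RHS](cards1 (L0 P P')); apply: eq_card => L; rewrite in_set1 in_set.
case Ll: (L \in lns) => /=; first exact: thru_two.
apply/esym/negbTE; apply: (contraFneq _ Ll) => ->; exact: L0_ln.
Qed.

Lemma cntC P P' H : P \in pts -> P' \in pts -> H \in subsp F 3 -> (P <= H)%MS ->
  #|[set L in lns | ((P <= L)%MS && (L <= H)%MS) && (P' <= L)%MS]| =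
    if P' == P then q.+1 else ((P' <= H)%MS : nat).
Proof.
move=> Pp P'p Hh PH; case: eqP => [->|/eqP ne].
  rewrite -(lns_thru_H Pp Hh PH); apply: eq_card => L; rewrite !inE.
  by case: (P <= L)%MS; rewrite ?andbT ?andbF.
case P'H : (P' <= H)%MS.
  rewrite -[RHS](cards1 (L0 P P')); apply: eq_card => L; rewrite in_set1 in_set.
  case Ll: (L \in lns) => /=.
    rewrite andbAC -(thru_two Pp P'p ne Ll).
    case e: ((P <= L)%MS && (P' <= L)%MS) => //=.
      by move: e; rewrite (thru_two Pp P'p ne Ll) => /eqP ->; rewrite L0_sub PH P'H.
  apply/esym/negbTE; apply: (contraFneq _ Ll) => ->; exact: L0_ln.
apply: eq_card0 => L; rewrite !inE; apply/negbTE.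
apply/negP => /andP[_ /andP[/andP[_ LH] P'L]].
by rewrite (submx_trans P'L LH) in P'H.
Qed.

Lemma cntB P' H : P' \in pts -> H \in subsp F 3 ->
  #|[set L in lns | (L <= H)%MS && (P' <= L)%MS]| = if (P' <= H)%MS then q.+1 else 0%N.
Proof.
move=> P'p Hh; case P'H : (P' <= H)%MS.
  rewrite -(lns_thru_H P'p Hh P'H); apply: eq_card => L; rewrite !inE.
  by case: (L <= H)%MS; case: (P' <= L)%MS; rewrite ?andbT ?andbF.
apply: eq_card0 => L; rewrite !inE; apply/negbTE.
apply/negP => /andP[_ /andP[LH P'L]].
by rewrite (submx_trans P'L LH) in P'H.
Qed.
End Count.

Section Real.
Variable R : realType.
Variable F : finFieldType.

Lemma sumY (Y X PS : {set 'M[F]_4}) (c : R) (cP : 'M[F]_4 -> R) :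
  Y \subset X ->
  (forall L, L \in X -> ((L \in Y) : nat)%:R = c + \sum_(P in PS) cP P * (((P <= L)%MS : bool) : nat)%:R) ->
  forall Q : pred 'M[F]_4,
  (#|[set L in Y | Q L]|%:R : R) = c * #|[set L in X | Q L]|%:R
     + \sum_(P in PS) cP P * #|[set L in X | Q L && (P <= L)%MS]|%:R.
Proof.
move=> YX hf Q.
rewrite !card_sum !natr_sum.
under [X in _ + X]eq_bigr do rewrite card_sum natr_sum mulr_sumr.
rewrite exchange_big mulr_sumr -big_split /=; apply: eq_bigr => L _.
under eq_bigr do rewrite inE.
rewrite !inE; case LX: (L \in X) => /=.
  case: (Q L) => /=.
    rewrite andbT (hf L LX) ?mulr1n mulr1 //.
  rewrite andbF ?mulr0n mulr0 big1 ?addr0 // => P _; by rewrite ?mulr0n mulr0.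
have LY : (L \in Y) = false.
  by apply/negbTE; apply: contraFN LX => LY; apply: (subsetP YX).
by rewrite LY /= ?mulr0n mulr0 big1 ?addr0 // => P _; rewrite ?mulr0n mulr0.
Qed.

Lemma sum_if (PS : {set 'M[F]_4}) (cP : 'M[F]_4 -> R) P (a : nat) (g : 'M[F]_4 -> nat) :
  P \in PS ->
  \sum_(P' in PS) cP P' * (if P' == P then a else g P')%:R =
  \sum_(P' in PS) cP P' * (g P')%:R + cP P * (a%:R - (g P)%:R).
Proof.
move=> PP; rewrite (bigD1 P) //= [in RHS](bigD1 P) //= eqxx.
rewrite (eq_bigr (fun P' => cP P' * (g P')%:R)); last first.
  by move=> P' /andP[_ /negbTE ->].
rewrite mulrBr; lra.
Qed.
End Real.

Unset Implicit Arguments.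
Theorem mainTheorem2 (R : realType) (F : finFieldType)
  (Y : {set 'M[F]_4}) (x : R) :
  Y \subset subsp F 2 ->
  deg_le1 (charf R Y) ->
  (#|Y|%:R : R) = x * ((#|F| ^ 2 + #|F| + 1)%N)%:R ->
  forall P H : 'M[F]_4, P \in subsp F 1 -> H \in subsp F 3 -> (P <= H)%MS ->
    x = (#|[set L in Y | (P <= L)%MS]|%:R : R)
        + (#|[set L in Y | (L <= H)%MS]|%:R)
        - (#|F|.+1)%:R * (#|[set L in Y | (P <= L)%MS && (L <= H)%MS]|%:R).
Proof.
move=> YX [c [cP hf]] hY P H Pp Hh PH.
have hf' : forall L, L \in subsp F 2 -> ((L \in Y) : nat)%:R =
    c + \sum_(P in subsp F 1) cP P * (((P <= L)%MS : bool) : nat)%:R.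
  by move=> L /hf.
have S := sumY YX hf'.
have hA := S (fun L => (P <= L)%MS).
have hB := S (fun L => (L <= H)%MS).
have hC := S (fun L => (P <= L)%MS && (L <= H)%MS).
have hT := S (fun L => true).
cbv beta in hA, hB, hC, hT.
rewrite (lns_thru_all Pp) in hA.
rewrite (eq_bigr (fun P' => cP P' * ((if P' == P then (#|F|^2+#|F|+1)%N else 1%N)%:R))) in hA;
  last by move=> P' P'p; rewrite cntA.
rewrite sum_if // in hA.
rewrite (lns_H Hh) in hB.
rewrite (eq_bigr (fun P' => (#|F|.+1)%:R * (cP P' * (nat_of_bool (P' <= H)%MS)%:R))) in hB;
  last by move=> P' P'p; rewrite cntB //; case: (P' <= H)%MS; rewrite ?mulr1 ?mulr0 // mulrC.
rewrite -mulr_sumr in hB.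
rewrite (lns_thru_H Pp Hh PH) in hC.
rewrite (eq_bigr (fun P' => cP P' * (if P' == P then #|F|.+1 else nat_of_bool (P' <= H)%MS)%:R)) in hC;
  last by move=> P' P'p; rewrite cntC.
rewrite sum_if // PH in hC.
have eY : [set L in Y | true] = Y by apply/setP => L; rewrite !inE ?andbT.
have eX : [set L in subsp F 2 | true] = subsp F 2 by apply/setP => L; rewrite !inE ?andbT.
rewrite eY eX lns_all in hT.
rewrite (eq_bigr (fun P' => cP P' * ((#|F|^2+#|F|+1)%N)%:R)) in hT; last first.
  move=> P' P'p; rewrite -(lns_thru_all P'p).
  have -> : [set L in subsp F 2 | true && (P' <= L)%MS] = [set L in subsp F 2 | (P' <= L)%MS].
    by apply/setP => L; rewrite !in_set.
  by [].
rewrite -mulr_suml hY in hT.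
rewrite (eq_bigr (fun P' => cP P')) in hA; last by move=> ? _; rewrite mulr1.
set N := ((#|F|^2+#|F|+1)%N)%:R in hT hA hB.
have hx : x = c * ((#|F|^2+1)%N)%:R + \sum_(P' in subsp F 1) cP P'.
  have N0 : N != 0 by rewrite /N pnatr_eq0 addn1.
  apply: (mulIf N0); rewrite mulrDl hT natrM mulrA //.
rewrite hx hA hB hC /N -!natr1 !natrD !natrX /=.
ring.
Qed.
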